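(* Let $\mathcal R$ be a reaction network and $x,x'\in\mathbb{N}_0^n$. Then $x$ leads to $x'$ via $\mathcal R$ if and only if there is $(y,y')\in\mathrm{cl}(\mathcal R)$ with $x\ge y$ and $x'=x+y'-y$; equivalently, if and only if there is $(y,y')\in\mathrm{cl}(\mathcal R)$ with $(x,x')\ge(y,y')$ and $(x,x')\sim(y,y')$.
   Context: A reaction network (RN) is a (possibly infinite) subset $\mathcal R\subseteq\mathbb{N}_0^n\times\mathbb{N}_0^n$ containing no element $(y,y')$ with $y=y'$; elements $(y,y')$ are reactions $y\to y'$. Order on $\mathbb{Z}^n$ and on $\mathbb{N}_0^n\times\mathbb{N}_0^n$ is componentwise. For $r_1=(y_1,y_1'),\ r_2=(y_2,y_2')$ define $r_1\oplus r_2=(y_1+0\vee(y_2-y_1'),\ y_2'+0\vee(y_1'-y_2))$ ($\vee$ componentwise maximum); it is associative. For $A\subseteq\mathbb{N}_0^n\times\mathbb{N}_0^n$, $\mathrm{cl}(A)$ is the set of all finite $\oplus$-sums of elements of $A$ (repetitions allowed), including the empty sum $(0,0)$. $(y_1,y_1')\sim(y_2,y_2')$ means $y_1'-y_1=y_2'-y_2$. An ordered sequence of reactions $y_1\to y_1',\dots,y_m\to y_m'$ is active on $x\in\mathbb{N}_0^n$ if $x+\sum_{i=1}^{k-1}(y_i'-y_i)\ge y_k$ for all $k=1,\dots,m$. A state $x$ leads to $x'$ via $\mathcal R$ if there is an ordered sequence of $m\ge0$ reactions of $\mathcal R$ (repetitions allowed) active on $x$ with $x'=x+\sum_{i=1}^m(y_i'-y_i)$.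 *)

(* Defs.v *)
From mathcomp Require Import all_boot all_order all_algebra.
Set Implicit Arguments. Unset Strict Implicit. Unset Printing Implicit Defensive.
Import GRing.Theory Num.Theory.

Definition vec (n : nat) := {ffun 'I_n -> nat}.
(* A reaction (y, y') : y -> y' *)
Definition reaction (n : nat) := (vec n * vec n)%type.

Definition vle n (x y : vec n) : Prop := forall i, x i <= y i.

(* r1 (+) r2 = (y1 + 0 v (y2 - y1'), y2' + 0 v (y1' - y2));
   truncated nat subtraction is exactly 0 v (a - b) *)
Definition oplus n (r1 r2 : reaction n) : reaction n :=
  ([ffun i => r1.1 i + (r2.1 i - r1.2 i)], [ffun i => r2.2 i + (r1.2 i - r2.1 i)]).

Definition rzero n : reaction n := ([ffun => 0], [ffun => 0]).

Definition cl n (A : reaction n -> Prop) (r : reaction n) : Prop :=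
  exists s : seq (reaction n),
    (forall j, j < size s -> A (nth (rzero n) s j)) /\
    r = foldr (@oplus n) (rzero n) s.

Definition delta n (r : reaction n) (i : 'I_n) : int :=
  (Posz (r.2 i) - Posz (r.1 i))%R.

Definition sim n (r1 r2 : reaction n) : Prop := forall i, delta r1 i = delta r2 i.

Definition active n (x : vec n) (s : seq (reaction n)) : Prop :=
  forall k, k < size s -> forall i,
    (Posz ((nth (rzero n) s k).1 i) <= Posz (x i) + \sum_(j < k) delta (nth (rzero n) s j) i)%R.

Definition leads_to n (R : reaction n -> Prop) (x x' : vec n) : Prop :=
  exists s : seq (reaction n),
    (forall j, j < size s -> R (nth (rzero n) s j)) /\
    active x s /\
    forall i, Posz (x' i) = (Posz (x i) + \sum_(j < size s) delta (nth (rzero n) s j) i)%R.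

Definition reaction_network n (R : reaction n -> Prop) : Prop :=
  forall r, R r -> r.1 <> r.2.

(* Main.v *)
Require Import Defs.
From mathcomp Require Import all_boot all_order all_algebra.
From mathcomp Require Import zify.
Import GRing.Theory Num.Theory.
Set Implicit Arguments.

Definition activeZ n (x : 'I_n -> int) (s : seq (reaction n)) : Prop :=
  forall k, k < size s -> forall i,
    (Posz ((nth (rzero n) s k).1 i) <= x i + \sum_(j < k) delta (nth (rzero n) s j) i)%R.

Lemma sum_delta n (s : seq (reaction n)) i :
  (\sum_(j < size s) delta (nth (rzero n) s j) i)%R = delta (foldr (@oplus n) (rzero n) s) i.
Proof.
elim: s => [|r t IH]; first by rewrite big_ord0 /delta /= !ffunE.
rewrite /= big_ord_recl /= IH /delta /oplus /= !ffunE.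
set a := r.1 i; set b := r.2 i.
set c := (foldr (@oplus n) (rzero n) t).1 i; set d := (foldr (@oplus n) (rzero n) t).2 i.
lia.
Qed.

Lemma activeZ_iff n (s : seq (reaction n)) (x : 'I_n -> int) :
  (forall i, (0 <= x i)%R) ->
  activeZ x s <-> forall i, (Posz ((foldr (@oplus n) (rzero n) s).1 i) <= x i)%R.
Proof.
elim: s x => [|r t IH] x Hx.
  by split=> [_ i|_ k //]; rewrite /= ffunE.
split.
- move=> H.
  have H0 : forall i, (Posz (r.1 i) <= x i)%R.
    by move=> i; have := H 0 erefl i; rewrite big_ord0 addr0.
  have Ht : activeZ (fun i => x i + delta r i)%R t.
    move=> k Hk i; have := H k.+1 Hk i; rewrite big_ord_recl /= addrA //.
  have Hxd : forall i, (0 <= x i + delta r i)%R.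
    by move=> i; have := H0 i; rewrite /delta; lia.
  have := (IH _ Hxd).1 Ht => H1 i.
  have := H0 i; have := H1 i; rewrite /oplus /delta /= !ffunE.
  set a := r.1 i; set b := r.2 i.
  set c := (foldr (@oplus n) (rzero n) t).1 i. lia.
- move=> H.
  have H0 : forall i, (Posz (r.1 i) <= x i)%R.
    move=> i; have := H i; rewrite /oplus /= !ffunE. lia.
  have Hxd : forall i, (0 <= x i + delta r i)%R.
    by move=> i; have := H0 i; rewrite /delta; lia.
  have Ht : activeZ (fun i => x i + delta r i)%R t.
    apply/(IH _ Hxd) => i; have := H i; rewrite /oplus /delta /= !ffunE.
    set a := r.1 i; set b := r.2 i.
    set c := (foldr (@oplus n) (rzero n) t).1 i. lia.
  case=> [_ i|k Hk i] /=; first by rewrite big_ord0 addr0.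
  rewrite big_ord_recl /= addrA; exact: Ht.
Qed.

Theorem lemma3p3 (n : nat) (R : reaction n -> Prop) (x x' : vec n) :
  reaction_network R ->
  (leads_to R x x' <->
     exists r : reaction n, cl R r /\ vle r.1 x /\
       forall i, Posz (x' i) = (Posz (x i) + Posz (r.2 i) - Posz (r.1 i))%R) /\
  (leads_to R x x' <->
     exists r : reaction n, cl R r /\ vle r.1 x /\ vle r.2 x' /\ sim (x, x') r).
Proof.
move=> _.
have key : leads_to R x x' <->
     exists r : reaction n, cl R r /\ vle r.1 x /\
       forall i, Posz (x' i) = (Posz (x i) + Posz (r.2 i) - Posz (r.1 i))%R.
  split.
  - case=> s [Hs [Ha Hx']].
    exists (foldr (@oplus n) (rzero n) s); split; first by exists s.
    have Hx0 : forall i, (0 <= Posz (x i))%R by [].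
    have := (@activeZ_iff n s (fun i => Posz (x i)) Hx0).1 Ha => Hle.
    split; first by move=> i; have := Hle i.
    move=> i; rewrite Hx' sum_delta /delta addrA //.
  - case=> r [[s [Hs ->]] [Hle Hx']].
    exists s; split=> //; split.
    + have Hx0 : forall i, (0 <= Posz (x i))%R by [].
      apply/(@activeZ_iff n s (fun i => Posz (x i)) Hx0) => i; have := Hle i; lia.
    + by move=> i; rewrite Hx' sum_delta /delta addrA.
split=> //; rewrite key; split.
- case=> r [Hc [Hle Hx']]; exists r; split=> //; split=> //; split.
  + move=> i; have := Hx' i; have := Hle i; lia.
  + move=> i; have := Hx' i; rewrite /delta /=; lia.
- case=> r [Hc [Hle [_ Hs]]]; exists r; split=> //; split=> //.
  move=> i; have := Hs i; rewrite /delta /=; lia.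
Qed.
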